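(* Let $X\subseteq U$ be a fixed set of $|X|=m$ keys (balls), let $h:U\to[n]$ be a simple tabulation hash function, and let $y\in[n]$ be any fixed bin. If $p$ denotes the probability that $y\in h(X)$, then $$|p-p_0|\le \frac{m^{2-1/c}}{n^2},\qquad\text{and hence}\qquad \bigl|\mathbb{E}[|h(X)|]-\mu_0\bigr|\le \frac{m^{2-1/c}}{n}.$$ Moreover, if $q\in U\setminus X$ is a distinguished query key and the bin $y$ is allowed to depend on $h(q)$ (e.g. $y=h(q)$), i.e. for every $z\in[n]$, conditioned on $h(q)=z$ the bin $y$ is a fixed function of $z$ and $p$ denotes the conditional probability that $y\in h(X)$, then the weaker bound $|p-p_0|\le \frac{2m^{2-1/c}}{n^2}$ holds.
   Context: Simple tabulation hashing: the key universe is $U=[u]=\{0,\dots,u-1\}$, and each key $x\in U$ is viewed as a vector $(x[0],\dots,x[c-1])$ of $c=O(1)$ characters, each $x[i]\in\Sigma=[u^{1/c}]$. The range is $[n]=[2^r]$, viewed as $r$-bit strings. A simple tabulation hash function is $h(x)=h_0(x[0])\oplus\cdots\oplus h_{c-1}(x[c-1])$, where $h_0,\dots,h_{c-1}:\Sigma\to[2^r]$ are independent fully random functions and $\oplus$ is bitwise XOR. Notation: $p_0=1-(1-1/n)^m$ and $\mu_0=np_0$ (the probability a given bin is non-empty, resp. the expected number of non-empty bins, when $m$ balls are hashed fully randomly into $n$ bins). *)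

(* Defs.v *)
From HB Require Import structures.
From mathcomp Require Import all_boot all_order all_algebra.
From mathcomp Require Import all_classical all_reals all_analysis.
Set Implicit Arguments. Unset Strict Implicit. Unset Printing Implicit Defensive.
Import Order.TTheory GRing.Theory Num.Theory.

(* Characters: Sigma = 'I_s.  Keys: vectors of c characters (U = [s^c]).
   Hash values: r-bit strings, [n] = [2^r].
   A table: c independent functions h_i : Sigma -> {0,1}^r. *)
Notation bits r := {ffun 'I_r -> bool}.
Notation key c s := {ffun 'I_c -> 'I_s}.
Notation table c s r := {ffun 'I_c -> {ffun 'I_s -> bits r}}.

Definition bxor r (a b : bits r) : bits r := [ffun i => addb (a i) (b i)].
Definition bzero r : bits r := [ffun => false].

Definition tab_hash c s r (t : table c s r) (x : key c s) : bits r :=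
  \big[@bxor r/bzero r]_(i < c) t i (x i).

Definition himg c s r (t : table c s r) (X : {set key c s}) : {set bits r} :=
  [set tab_hash t x | x in X].

Local Open Scope ring_scope.

Definition prob (R : realType) c s r (E : pred (table c s r)) : R :=
  #|[set t : table c s r | E t]|%:R / #|[set: table c s r]|%:R.

Definition cprob (R : realType) c s r (E F : pred (table c s r)) : R :=
  #|[set t : table c s r | E t && F t]|%:R / #|[set t : table c s r | F t]|%:R.

Definition expect (R : realType) c s r (f : table c s r -> nat) : R :=
  (\sum_(t : table c s r) (f t)%:R) / #|[set: table c s r]|%:R.

(* Main.v *)
Require Import Defs.
From HB Require Import structures.
From mathcomp Require Import all_boot all_order all_algebra.
From mathcomp Require Import all_classical all_reals all_analysis.
From mathcomp Require Import lra ring zify.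
Set Implicit Arguments. Unset Strict Implicit. Unset Printing Implicit Defensive.
Import Order.TTheory GRing.Theory Num.Theory.

Lemma bxorA r : associative (@bxor r).
Proof. by move=> a b d; apply/ffunP=> i; rewrite !ffunE addbA. Qed.
Lemma bxorC r : commutative (@bxor r).
Proof. by move=> a b; apply/ffunP=> i; rewrite !ffunE addbC. Qed.
Lemma bxor0 r : left_id (bzero r) (@bxor r).
Proof. by move=> a; apply/ffunP=> i; rewrite !ffunE. Qed.
HB.instance Definition _ r := Monoid.isComLaw.Build (bits r) (bzero r) (@bxor r) (@bxorA r) (@bxorC r) (@bxor0 r).
Lemma bxor0r r (a : bits r) : bxor a (bzero r) = a.
Proof. by rewrite bxorC bxor0. Qed.
Lemma bxorK r (a : bits r) : bxor a a = bzero r.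
Proof. by apply/ffunP=> i; rewrite !ffunE addbb. Qed.
Lemma bxorKl r (a b : bits r) : bxor a (bxor a b) = b.
Proof. by rewrite bxorA bxorK bxor0. Qed.
Lemma bxor_eq r (a b d : bits r) : (bxor a b == d) = (b == bxor a d).
Proof. by apply/eqP/eqP=> [<-|->]; rewrite bxorKl. Qed.


Definition coll (A B : finType) (f : A -> B) (G : {set A}) :=
  [set p : A * A | [&& p.1 \in G, p.2 \in G, p.1 != p.2 & f p.1 == f p.2]].

Lemma card_img_coll (A B : finType) (f : A -> B) (G : {set A}) :
  #|G| <= #|f @: G| + #|coll f G|.
Proof.
have [k] := ubnP #|G|; elim: k G => // k IH G Gk.
case: (finset.set_0Vmem G) => [->|[x xG]]; first by rewrite cards0.
set G' := G :\ x.
have cG : #|G| = #|G'|.+1 by rewrite (finset.cardsD1 x G) xG.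
have x'G : x \notin G' by rewrite !inE eqxx.
have IH' : #|G'| <= #|f @: G'| + #|coll f G'| by apply: IH; rewrite -ltnS -cG.
have eG : G = x |: G' by rewrite finset.setD1K.
have sub : coll f G' \subset coll f G.
  apply/fintype.subsetP => p; rewrite !inE => /and4P[/andP[_ ->] /andP[_ ->] -> ->].
  by [].
rewrite cG eG finset.imsetU1.
case: (boolP (f x \in f @: G')) => fx.
  have -> : f x |: (f @: G') = f @: G' by apply/finset.setUidPr; rewrite finset.sub1set.
  case/imsetP: fx => x' x'in fxx'.
  have nin : (x, x') \notin coll f G' by rewrite inE /= (negbTE x'G).
  have inn : (x, x') \in coll f G.
    rewrite !inE /= xG (fintype.subsetP (finset.subsetDl G [set x]) _ x'in) fxx' eqxx !andbT.
    by apply/eqP => exx; rewrite exx x'in in x'G.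
  have : #|(x, x') |: coll f G'| <= #|coll f G|.
    by apply: subset_leq_card; rewrite finset.subUset sub finset.sub1set inn.
  rewrite finset.cardsU1 nin /= add1n => h.
  by rewrite -eG; apply: leq_trans (leq_add (leqnn _) h); rewrite addnS ltnS.
rewrite finset.cardsU1 fx add1n addSn ltnS -eG.
by apply: leq_trans IH' _; rewrite leq_add2l subset_leq_card.
Qed.

Lemma card_sumT (A : finType) (S : {set A}) (P : pred A) : #|[set t in S | P t]| = \sum_(t in S) (P t : nat).
Proof.
rewrite -sum1_card big_mkcond /= [RHS]big_mkcond; apply: eq_bigr => t _.
by rewrite inE; case: (t \in S); case: (P t).
Qed.

Lemma bxorKr r (a b : bits r) : bxor (bxor a b) b = a.
Proof. by rewrite -bxorA bxorK bxor0r. Qed.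

Local Open Scope ring_scope.
Lemma eqle (R : realFieldType) (x y : R) : x = y -> x <= y.
Proof. by move->. Qed.

Lemma bern_lo (R : realFieldType) (x : R) g : 0 <= x <= 1 -> 1 - g%:R * x <= (1 - x)^+g.
Proof.
move=> /andP[x0 x1]; elim: g => [|g IH]; first by rewrite expr0 mul0r subr0.
rewrite exprS -natr1.
have h1 : 0 <= 1 - x by lra.
apply: le_trans (ler_wpM2l h1 IH).
have : 0 <= g%:R * x * x :> R by rewrite mulr_ge0 ?mulr_ge0.
nra.
Qed.
Lemma bern_hi (R : realFieldType) (x : R) g : 0 <= x <= 1 ->
  (1 - x)^+g <= 1 - g%:R * x + g%:R^+2 * x^+2.
Proof.
move=> /andP[x0 x1]; elim: g => [|g IH]; first by rewrite expr0 mul0r subr0 expr0n /= mul0r addr0.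
rewrite exprS -natr1.
have h1 : 0 <= 1 - x by lra.
apply: le_trans (ler_wpM2l h1 IH) _.
have g0 : 0 <= g%:R :> R by [].
have : 0 <= g%:R ^+ 2 * x ^+ 3 :> R by rewrite mulr_ge0 ?exprn_ge0.
have : 0 <= g%:R * x ^+ 2 :> R by rewrite mulr_ge0 ?exprn_ge0.
have : 0 <= x ^+ 2 :> R by rewrite exprn_ge0.
rewrite !expr2 !exprS expr0 ?mulr1.
nra.
Qed.

Local Close Scope ring_scope.

Section Tab.
Variables c s r : nat.
Local Notation T := (table c s r).
Local Notation K := (key c s).

Definition upd (t : T) (i : 'I_c) (a : 'I_s) (v : bits r) : T :=
  [ffun j => [ffun b => if (j == i) && (b == a) then v else t j b]].

Lemma updE t i a v j b : upd t i a v j b = if (j == i) && (b == a) then v else t j b.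
Proof. by rewrite /upd !ffunE. Qed.
Lemma upd_id t i a : upd t i a (t i a) = t.
Proof. apply/ffunP=> j; apply/ffunP=> b; rewrite updE.
by case: eqP=> [->|] //=; case: eqP=> [->|]. Qed.
Lemma upd_upd t i a v w : upd (upd t i a v) i a w = upd t i a w.
Proof. apply/ffunP=> j; apply/ffunP=> b; by rewrite !updE; case: ((j == i) && (b == a)). Qed.
Lemma upd_at t i a v : upd t i a v i a = v.
Proof. by rewrite updE !eqxx. Qed.
Lemma upd_other t i a v j b : j != i -> upd t i a v j b = t j b.
Proof. by rewrite updE => /negbTE->. Qed.

Lemma hash_upd_out t i a v (x : K) : x i != a -> tab_hash (upd t i a v) x = tab_hash t x.
Proof.
move=> xi; apply: eq_bigr => k _; rewrite updE.
by case: eqP => [->|] //=; rewrite (negbTE xi).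
Qed.

Lemma hash_split t i (x : K) : tab_hash t x = bxor (t i (x i)) (\big[@bxor r/bzero r]_(k | k != i) t k (x k)).
Proof. by rewrite /tab_hash (bigD1 i). Qed.

Lemma hash_upd_in t i a v (x : K) : x i = a ->
  tab_hash (upd t i a v) x = bxor (bxor v (t i a)) (tab_hash t x).
Proof.
move=> xi; rewrite !(hash_split _ i) xi upd_at -!bxorA bxorKl -xi.
congr bxor; apply: eq_bigr => k ki; by rewrite upd_other.
Qed.


Lemma card_bits : #|{: bits r}| = 2 ^ r.
Proof. by rewrite card_ffun card_bool card_ord. Qed.

Definition fib (S : {set T}) i a := [set t in S | t i a == bzero r].

Lemma fiber (S : {set T}) i a (cl : forall t v, t \in S -> upd t i a v \in S) (F : T -> nat) :
  \sum_(t in S) F t = \sum_(t in fib S i a) \sum_(v : bits r) F (upd t i a v).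
Proof.
rewrite pair_big /=.
rewrite (reindex (fun t => (upd t i a (bzero r), t i a))) /=.
  apply: eq_big => t; last by move=> _; rewrite upd_upd upd_id.
  rewrite !inE upd_at eqxx !andbT; apply/idP/idP; first exact: cl.
  by move=> /(cl _ (t i a)); rewrite upd_upd upd_id.
exists (fun p => upd p.1 i a p.2) => [t _|[t v]]; first by rewrite /= upd_upd upd_id.
by rewrite !inE /= andbT => /andP[_ /eqP t0]; rewrite upd_upd upd_at -t0 upd_id.
Qed.

Lemma card_fiber (S : {set T}) i a (cl : forall t v, t \in S -> upd t i a v \in S) :
  #|S| = (2 ^ r * #|fib S i a|)%N.
Proof.
rewrite -!sum1_card (fiber cl) mulnC big_distrl /=; apply: eq_bigr => t _.
by rewrite sum1_card card_bits mul1n.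
Qed.


Lemma card_sum (S : {set T}) (P : pred T) : #|[set t in S | P t]| = \sum_(t in S) (P t : nat).
Proof. exact: card_sumT. Qed.

Lemma sum_eq1 (w : bits r) : \sum_(v : bits r) ((v == w) : nat) = 1%N.
Proof. by rewrite (bigD1 w) //= eqxx big1 // => v /negbTE ->. Qed.

Lemma pair_count (S : {set T}) j b (cl : forall t v, t \in S -> upd t j b v \in S) (x x' : K) :
  x j = b -> x' j != b ->
  (2 ^ r * #|[set t in S | tab_hash t x == tab_hash t x']|)%N = #|S|.
Proof.
move=> xj x'j; rewrite card_sum (fiber cl) (card_fiber cl) -sum1_card !big_distrr /=.
apply: eq_bigr => t; rewrite inE => /andP[_ /eqP t0].
rewrite (eq_bigr (fun v => (v == bxor (tab_hash t x) (tab_hash t x')) : nat)) ?sum_eq1 //.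
move=> v _; rewrite hash_upd_in // hash_upd_out // t0 bxor0r.
by rewrite [bxor v _]bxorC bxor_eq.
Qed.


Section Step.
Variable y : bits r.
Variable S : {set T}.
Variable X : {set K}.
Variables (i : 'I_c) (a : 'I_s).
Hypothesis cl : forall t v, t \in S -> upd t i a v \in S.

Definition GG := [set x in X | x i == a].
Definition XX := [set x in X | x i != a].
Definition WW t := [set bxor y (tab_hash t x) | x in GG].

Lemma X_split : X = XX :|: GG.
Proof. by apply/setP => x; rewrite !inE; case: (x i == a); case: (x \in X). Qed.

Lemma himg_split (t : T) : himg t X = himg t XX :|: himg t GG.
Proof. by rewrite {1}X_split /himg finset.imsetU. Qed.

Lemma count_X : #|[set t in S | y \notin himg t X]| =
  \sum_(t in fib S i a) ((y \notin himg t XX) * (2 ^ r - #|WW t|))%N.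
Proof.
rewrite card_sum (fiber cl); apply: eq_bigr => t; rewrite inE => /andP[_ /eqP t0].
have e1 v : himg (upd t i a v) XX = himg t XX.
  by apply: eq_in_imset => x; rewrite inE => /andP[_ xi]; rewrite hash_upd_out.
have e2 v : (y \in himg (upd t i a v) GG) = (v \in WW t).
  apply/imsetP/imsetP => [[x xG e]|[x xG e]]; exists x => //.
    by rewrite e hash_upd_in ?t0 ?bxor0r ?bxorKr //; move: xG; rewrite inE => /andP[_ /eqP].
  have xi : x i = a by move: xG; rewrite inE => /andP[_ /eqP].
  by rewrite (hash_upd_in t v xi) t0 bxor0r e bxorKr.
rewrite (eq_bigr (fun v => ((y \notin himg t XX) * (v \notin WW t))%N)); last first.
  move=> v _; rewrite himg_split finset.in_setU negb_or e1 e2.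
  by case: (y \in himg t XX); case: (v \in WW t).
rewrite -big_distrr /=; congr (_ * _)%N.
transitivity #|[set v in [set: bits r] | v \notin WW t]|.
  by rewrite card_sumT; apply: eq_bigl => v; rewrite inE.
rewrite -card_bits -(finset.cardsC (WW t)) addKn; apply: eq_card => v.
by rewrite finset.in_setC finset.in_set finset.in_setT.
Qed.

Lemma count_XX : #|[set t in S | y \notin himg t XX]| =
  \sum_(t in fib S i a) ((y \notin himg t XX) * 2 ^ r)%N.
Proof.
rewrite card_sum (fiber cl); apply: eq_bigr => t _.
have e1 v : himg (upd t i a v) XX = himg t XX.
  by apply: eq_in_imset => x; rewrite inE => /andP[_ xi]; rewrite hash_upd_out.
rewrite (eq_bigr (fun v => (y \notin himg t XX) : nat)); last by move=> v _; rewrite e1.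
by rewrite sum_nat_const card_bits mulnC.
Qed.

Definition CC t := #|coll (fun x => bxor y (tab_hash t x)) GG|.

Lemma coll_bound t : #|GG| <= #|WW t| + CC t.
Proof. exact: card_img_coll. Qed.

Lemma W_bound t : #|WW t| <= #|GG|.
Proof. exact: leq_imset_card. Qed.

Variable Fok : 'I_c -> 'I_s -> bool.
Hypothesis closS : forall j b t v, Fok j b -> t \in S -> upd t j b v \in S.
Hypothesis Hpair : forall x x' : K, x \in X -> x' \in X -> x != x' ->
  exists j, x j != x' j /\ (Fok j (x j) || Fok j (x' j)).

Lemma pair_fib (x x' : K) : x \in GG -> x' \in GG -> x != x' ->
  (2 ^ r * #|[set t in fib S i a | tab_hash t x == tab_hash t x']|)%N = #|fib S i a|.
Proof.
rewrite !inE => /andP[xX /eqP xi] /andP[x'X /eqP x'i] xx.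
have [j [xj F]] := Hpair xX x'X xx.
have ji : j != i by apply: contraNneq xj => ->; rewrite xi x'i.
have clj b : Fok j b -> forall t v, t \in fib S i a -> upd t j b v \in fib S i a.
  move=> Fb t v; rewrite !inE => /andP[tS t0].
  by rewrite closS // upd_other ?t0 ?eqxx // eq_sym.
case/orP: F => F.
  by apply: (pair_count (clj _ F)) => //; rewrite eq_sym.
rewrite -(pair_count (clj _ F) (x := x') (x' := x) (erefl _) xj).
by congr (_ * _)%N; apply: eq_card => t; rewrite !inE [tab_hash t x' == _]eq_sym.
Qed.

Lemma sumCC : (2 ^ r * \sum_(t in fib S i a) CC t <= #|GG| ^ 2 * #|fib S i a|)%N.
Proof.
have e t : CC t = \sum_(p in finset.setX GG GG) ((p.1 != p.2) && (tab_hash t p.1 == tab_hash t p.2) : nat).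
  rewrite /CC -card_sumT; apply: eq_card => p; rewrite !inE.
  rewrite bxor_eq bxorKl; case: (p.1 \in X); case: (p.2 \in X); case: (p.1 i == a); by case: (p.2 i == a).
rewrite (eq_bigr _ (fun t _ => e t)) exchange_big /= big_distrr /=.
rewrite -mulnn -finset.cardsX -sum_nat_const; apply: leq_sum => p; rewrite inE => /andP[p1 p2].
case: (eqVneq p.1 p.2) => [_|ne]; first by rewrite big1 ?muln0.
rewrite -(pair_fib p1 p2 ne) leq_mul2l card_sum; apply/orP; right.
by apply: eq_leq; apply: eq_bigr => t _.
Qed.

Local Open Scope ring_scope.
Variable R : realType.
Definition nR : R := (2 ^ r)%:R.
Definition bR : R := 1 - nR^-1.
Definition PP (A : {set K}) : R := #|[set t in S | y \notin himg t A]|%:R / #|S|%:R.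

Lemma nR_gt0 : 0 < nR.
Proof. by rewrite ltr0n expn_gt0. Qed.

Lemma nb_bounds g : nR - g%:R <= nR * bR ^+ g <= nR - g%:R + g%:R ^+ 2 / nR.
Proof.
have n0 := nR_gt0.
have x01 : 0 <= nR^-1 <= 1 by rewrite invr_ge0 ltW //= invf_le1 // ler1n expn_gt0.
apply/andP; split.
  apply: le_trans (ler_wpM2l (ltW n0) (bern_lo g x01)).
  by apply: eqle; field; rewrite gt_eqF.
apply: le_trans (ler_wpM2l (ltW n0) (bern_hi g x01)) _.
by apply: eqle; field; rewrite gt_eqF.
Qed.

Definition ee t : R := ((y \notin himg t XX) * (2 ^ r - #|WW t|))%:R
   - bR ^+ #|GG| * ((y \notin himg t XX) * 2 ^ r)%:R.

Lemma e_bound t : - (#|GG|%:R ^+ 2 / nR) <= ee t <= (CC t)%:R.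
Proof.
have n0 := nR_gt0.
have q0 : 0 <= #|GG|%:R ^+ 2 / nR by rewrite divr_ge0 ?exprn_ge0 // ltW.
rewrite /ee; case: (y \notin himg t XX); last first.
  by rewrite !mul0n mulr0 subr0 oppr_le0 q0 /=.
rewrite !mul1n natrB; last first.
  by apply: leq_trans (max_card _) _; rewrite card_bits.
have h1 := coll_bound t; have h2 := W_bound t.
move: h1 h2; rewrite -!(ler_nat R) natrD => h1 h2.
have := nb_bounds #|GG|; rewrite -/nR [bR ^+ _ * _]mulrC.
move: (#|GG|%:R) (#|WW t|%:R) (CC t)%:R (nR * bR ^+ #|GG|) q0 h1 h2 => g d C nb q0 h1 h2 /andP[h3 h4].
apply/andP; split; lra.
Qed.

Hypothesis Spos : (0 < #|S|)%N.

Lemma step_R : `|PP X - bR ^+ #|GG| * PP XX| <= #|GG|%:R ^+ 2 / nR ^+ 2.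
Proof.
have n0 := nR_gt0.
have cS := card_fiber cl.
have N0p : (0 < #|fib S i a|)%N by move: Spos; rewrite cS muln_gt0 => /andP[].
have eP : PP X - bR ^+ #|GG| * PP XX = (\sum_(t in fib S i a) ee t) / (nR * #|fib S i a|%:R).
  rewrite /PP count_X count_XX cS natrM -/nR mulrA -mulrBl; congr (_ / _).
  by rewrite /ee sumrB !natr_sum mulr_sumr.
have up : \sum_(t in fib S i a) ee t <= #|GG|%:R ^+ 2 * #|fib S i a|%:R / nR.
  apply: le_trans (ler_sum _ (fun t _ => (andP (e_bound t)).2)) _.
  rewrite -natr_sum ler_pdivlMr // /nR -natrX -!natrM ler_nat mulnC.
  exact: sumCC.
have lo : - (#|GG|%:R ^+ 2 * #|fib S i a|%:R / nR) <= \sum_(t in fib S i a) ee t.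
  apply: le_trans _ (ler_sum _ (fun t _ => (andP (e_bound t)).1)).
  by rewrite sumr_const -mulr_natr; apply: eqle; field; rewrite gt_eqF.
have H : `|\sum_(t in fib S i a) ee t| <= #|GG|%:R ^+ 2 * #|fib S i a|%:R / nR.
  by rewrite ler_norml lo up.
rewrite eP normrM; apply: le_trans (ler_wpM2r _ H) _; first by rewrite normr_ge0.
have N0R : 0 < #|fib S i a|%:R :> R by rewrite ltr0n.
rewrite ger0_norm; last by rewrite invr_ge0 mulr_ge0 ?ltW.
by apply: eqle; field; rewrite !gt_eqF.
Qed.

End Step.


Section Main.
Local Open Scope ring_scope.
Variable R : realType.
Variable y : bits r.
Variable S : {set T}.
Hypothesis Spos : (0 < #|S|)%N.
Variable Fok : 'I_c -> 'I_s -> bool.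
Hypothesis closS : forall j b t v, Fok j b -> t \in S -> upd t j b v \in S.
Variable L : R.

Definition pairH (X : {set K}) := forall x x' : K, x \in X -> x' \in X -> x != x' ->
  exists j, x j != x' j /\ (Fok j (x j) || Fok j (x' j)).
Definition grpH (X : {set K}) := forall Y : {set K}, Y \subset X -> Y != finset.set0 ->
  exists i a, [/\ Fok i a, (0 < #|[set x in Y | x i == a]|)%N & #|[set x in Y | x i == a]|%:R <= L].

Lemma bR01 : 0 <= bR R <= 1.
Proof.
have n0 := nR_gt0 R.
rewrite /bR subr_ge0 invf_le1 // ler1n expn_gt0 /= lerBlDr lerDl invr_ge0 ltW //.
Qed.

Lemma main_ind (X : {set K}) : pairH X -> grpH X ->
  `|PP y S R X - bR R ^+ #|X| | <= #|X|%:R * L / (nR R) ^+ 2.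
Proof.
have [k] := ubnP #|X|; elim: k X => // k IH X Xk hp hg.
have n0 := nR_gt0 R.
case: (eqVneq X finset.set0) => [->|Xn0].
  rewrite cards0 expr0 mul0r mul0r /PP.
  have -> : [set t in S | y \notin himg t finset.set0] = S.
    by apply/setP => t; rewrite !inE /himg finset.imset0 finset.in_set0 andbT.
  by rewrite divff ?subrr ?normr0 // pnatr_eq0 -lt0n.
have [i [a [Fi gp gL]]] := hg X (subxx X) Xn0.
have cl : forall t v, t \in S -> upd t i a v \in S by move=> t v; apply: closS.
have eXX : XX X i a \subset X by apply/fintype.subsetP => x; rewrite inE => /andP[].
have cX : #|X| = (#|XX X i a| + #|GG X i a|)%N.
  rewrite -(finset.cardsID [set x : K | x i == a] X) addnC; congr (_ + _)%N; apply: eq_card => x;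
  by rewrite !inE // andbC.
have gp' : (0 < #|GG X i a|)%N := gp.
have ltX : (#|XX X i a| < k)%N by move: Xk gp'; rewrite cX; lia.
have hp' : pairH (XX X i a).
  by move=> x x' xX x'X; apply: hp; [exact: (fintype.subsetP eXX _ xX)|exact: (fintype.subsetP eXX _ x'X)].
have hg' : grpH (XX X i a).
  by move=> Y YX; apply: hg; exact: (fintype.subset_trans YX eXX).
have IH' := IH _ ltX hp' hg'.
have st : `|PP y S R X - bR R ^+ #|GG X i a| * PP y S R (XX X i a)| <= #|GG X i a|%:R ^+ 2 / nR R ^+ 2.
  exact: (@step_R y S X i a cl Fok closS hp R Spos).
set g := #|GG X i a| in cX gp gL st *.
set g' := #|XX X i a| in cX IH' *.
set P1 := PP y S R X in st *. set P2 := PP y S R (XX X i a) in st IH' *.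
have [b0 b1] := andP bR01.
set b := bR R in b0 b1 st IH' *.
set n := nR R in n0 st IH' *.
have bg0 : 0 <= b ^+ g by rewrite exprn_ge0.
have bg1 : b ^+ g <= 1 by rewrite exprn_ile1.
have gR : 0 < g%:R :> R by rewrite ltr0n.
have L0 : 0 <= L by apply: le_trans gL; rewrite ltW.
rewrite cX exprD.
have e (p1 p2 u v : R) : p1 - v * u = (p1 - u * p2) + u * (p2 - v) by ring.
rewrite (e _ P2).
apply: le_trans (ler_normD _ _) _.
rewrite normrM (ger0_norm bg0).
have h2 : b ^+ g * `|P2 - b ^+ g'| <= g'%:R * L / n ^+ 2.
  apply: le_trans (ler_wpM2r (normr_ge0 _) bg1) _; rewrite mul1r //.
have h1 : g%:R ^+ 2 / n ^+ 2 <= g%:R * L / n ^+ 2.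
  rewrite ler_pM2r ?invr_gt0 ?exprn_gt0 // expr2 ler_pM2l //.
rewrite natrD mulrDl mulrDl [X in _ <= X]addrC.
by apply: lerD; [apply: le_trans st h1|].
Qed.

End Main.

End Tab.


Section Comb.
Variables c s : nat.
Local Notation K := (key c s).

Definition proj (Y : {set K}) (i : 'I_c) : {set 'I_s} := (fun x : K => x i) @: Y.

Lemma prod_foldr (I : Type) (f : I -> nat) (l : seq I) :
  foldr muln 1%N [seq f x | x <- l] = \prod_(x <- l) f x.
Proof. by elim: l => [|x l IH]; rewrite ?big_nil ?big_cons //= IH. Qed.

Lemma card_le_prod (Y : {set K}) :
  (#|Y| <= \prod_(i < c) #|proj Y i|)%N.
Proof.
have sub : Y \subset family (fun i : 'I_c => mem (proj Y i)).
  apply/fintype.subsetP => x xY; apply/familyP => i.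
  by apply/imsetP; exists x.
apply: leq_trans (subset_leq_card sub) _.
by rewrite card_family prod_foldr big_enum /= leqnn.
Qed.

Lemma wide (Y : {set K}) : (0 < c)%N -> exists i, (#|Y| <= #|proj Y i| ^ c)%N.
Proof.
move=> c0.
case: (@arg_maxnP _ (Ordinal c0) predT (fun i => #|proj Y i|) isT) => i _ Hi.
exists i; apply: leq_trans (card_le_prod Y) _.
rewrite -[X in (_ ^ X)%N](card_ord c) -prod_nat_const.
by apply: leq_prod => j _; exact: Hi.
Qed.

Lemma sum_pred1 (A : finType) (V : {set A}) (b : A) : (\sum_(a in V) ((b == a) : nat) = (b \in V))%N.
Proof.
rewrite (big_mkcond (mem V)) (bigD1 b) //= big1 => [|a /negbTE ab]; last by rewrite eq_sym ab if_same.
by rewrite eqxx addn0; case: (b \in V).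
Qed.

Lemma class_sum (Y : {set K}) i (V : {set 'I_s}) :
  (\sum_(a in V) #|[set x in Y | x i == a]| <= #|Y|)%N.
Proof.
rewrite (eq_bigr (fun a => \sum_(x in Y) ((x i == a) : nat))); last by move=> a _; rewrite card_sumT.
rewrite exchange_big /= -sum1_card; apply: leq_sum => x _.
by rewrite sum_pred1; case: (x i \in V).
Qed.

Lemma class_min (Y : {set K}) i (V : {set 'I_s}) : V \subset proj Y i -> V != finset.set0 ->
  exists a, [/\ a \in V, (#|[set x in Y | x i == a]| * #|V| <= #|Y|)%N
      & (0 < #|[set x in Y | x i == a]|)%N].
Proof.
move=> VY /finset.set0Pn [a1 a1V].
case: (@arg_minnP _ a1 (mem V) (fun a => #|[set x in Y | x i == a]|) a1V) => a aV Ha.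
exists a; split => //.
  apply: leq_trans (class_sum Y i V); rewrite mulnC -sum_nat_const.
  by apply: leq_sum => b bV; exact: Ha.
move: (fintype.subsetP VY a aV) => /imsetP[x xY ->].
by apply/card_gt0P; exists x; rewrite inE xY eqxx.
Qed.

Local Open Scope ring_scope.
Lemma real_g (R : realType) (g D k m C : nat) : (0 < c)%N -> (0 < k)%N -> (k <= m)%N ->
  (g * D <= C * k)%N -> k%:R `^ (c%:R^-1) <= D%:R :> R ->
  g%:R <= C%:R * m%:R `^ (1 - c%:R^-1) :> R.
Proof.
move=> c0 k0 km hD hk.
set p : R := c%:R^-1 in hk *.
have p1 : p <= 1 by rewrite invf_le1 ?ltr0n // ler1n.
have p0 : 0 <= 1 - p by rewrite subr_ge0.
have kR : 0 < k%:R :> R by rewrite ltr0n.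
have u0 : 0 < k%:R `^ p := powR_gt0 p kR.
have ek : k%:R = k%:R `^ (1 - p) * k%:R `^ p :> R.
  rewrite -powRD ?subrK ?powRr1 ?ltW //.
  by apply/implyP => _; rewrite gt_eqF.
have H1 : g%:R * k%:R `^ p <= g%:R * D%:R :> R by rewrite ler_wpM2l.
have H2 : g%:R * D%:R <= C%:R * k%:R :> R by rewrite -!natrM ler_nat.
have H3 : g%:R <= C%:R * k%:R `^ (1 - p) :> R.
  rewrite -(ler_pM2r u0) -mulrA -ek; exact: le_trans H1 H2.
apply: le_trans H3 _; rewrite ler_wpM2l //.
by apply: ge0_ler_powR => //; rewrite ?nnegrE ?ler_nat.
Qed.

Lemma k_le_D (R : realType) k D : (0 < c)%N -> (k <= D ^ c)%N -> k%:R `^ (c%:R^-1) <= D%:R :> R.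
Proof.
move=> c0 h.
have : k%:R <= D%:R `^ c%:R :> R by rewrite powR_mulrn // -natrX ler_nat.
move=> /(@ge0_ler_powR R (c%:R^-1)) H.
have p0 : 0 <= c%:R^-1 :> R by rewrite invr_ge0 ler0n.
have := H p0; rewrite !nnegrE powR_ge0 ler0n => /(_ isT isT).
by rewrite -powRrM mulfV ?pnatr_eq0 -?lt0n // powRr1.
Qed.

Lemma proj_n0 (Y : {set K}) i : Y != finset.set0 -> proj Y i != finset.set0.
Proof.
case/finset.set0Pn => x xY; apply/finset.set0Pn; exists (x i); apply/imsetP; by exists x.
Qed.

Lemma grp1 (R : realType) (X : {set K}) m : (0 < c)%N -> #|X| = m ->
  grpH (R:=R) (fun _ _ => true) (m%:R `^ (1 - c%:R^-1)) X.
Proof.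
move=> c0 Xm Y YX Yn0.
have k0 : (0 < #|Y|)%N by rewrite card_gt0.
have km : (#|Y| <= m)%N by rewrite -Xm subset_leq_card.
have [i hi] := wide Y c0.
have [a [aV hg gp]] := class_min (subxx (proj Y i)) (proj_n0 i Yn0).
exists i, a; split => //.
have := @real_g R #|[set x in Y | x i == a]| #|proj Y i| #|Y| m 1 c0 k0 km.
by rewrite mul1n mul1r; apply => //; exact: k_le_D.
Qed.

Lemma ex_diff (x x' : K) : x != x' -> exists j, x j != x' j.
Proof.
move=> ne; case: (pickP (fun j => x j != x' j)) => [j h|h]; first by exists j.
by case/eqP: ne; apply/ffunP => j; apply/eqP; move: (h j) => /negbFE.
Qed.

Lemma pair1 (X : {set K}) : pairH (fun _ _ => true) X.
Proof. by move=> x x' _ _ /ex_diff [j h]; exists j. Qed.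

Lemma pair3 (q : K) (X : {set K}) : pairH (fun j b => b != q j) X.
Proof.
move=> x x' _ _ /ex_diff [j h]; exists j; split => //.
by apply: contraR h; rewrite negb_or !negbK => /andP[/eqP -> /eqP ->].
Qed.

Lemma grp3 (R : realType) (X : {set K}) m (q : K) : (0 < c)%N -> #|X| = m -> q \notin X ->
  grpH (R:=R) (fun j b => b != q j) (2%:R * m%:R `^ (1 - c%:R^-1)) X.
Proof.
move=> c0 Xm qX Y YX Yn0.
have k0 : (0 < #|Y|)%N by rewrite card_gt0.
have km : (#|Y| <= m)%N by rewrite -Xm subset_leq_card.
have [i hi] := wide Y c0.
case: (leqP #|proj Y i| 1) => D1.
  have k1 : #|Y| = 1%N.
    apply/eqP; rewrite eqn_leq k0 andbT; apply: leq_trans hi _.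
    by rewrite -(exp1n c) leq_exp2r.
  case/cards1P: (introT eqP k1) => x Yx.
  have xX : x \in X by apply: (fintype.subsetP YX); rewrite Yx finset.set11.
  have xq : x != q by apply: contraNneq qX => <-.
  have [j xj] := ex_diff xq.
  exists j, (x j).
  have -> : [set x' in Y | x' j == x j] = Y.
    by apply/setP => z; rewrite !inE Yx finset.in_set1; case: eqP => // ->; rewrite eqxx.
  rewrite k1; split => //.
  have m1 : 1 <= m%:R :> R by rewrite ler1n -k1.
  have : 1 <= m%:R `^ (1 - c%:R^-1) :> R.
    have := @ler_powR R m%:R m1 0 (1 - c%:R^-1); rewrite powRr0; apply.
    by rewrite subr_ge0 invf_le1 ?ltr0n // ler1n.
  move=> h; lra.
set V := proj Y i :\ q i.
have cV : (#|proj Y i| <= (q i \in proj Y i) + #|V|)%N by rewrite (finset.cardsD1 (q i) (proj Y i)).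
have V0 : V != finset.set0.
  by rewrite -card_gt0; move: cV D1; case: (q i \in proj Y i) => /=; lia.
have VY : V \subset proj Y i by apply: finset.subsetDl.
have [a [aV hg gp]] := class_min VY V0.
exists i, a; split => //.
  by move: aV; rewrite !inE => /andP[].
have := @real_g R #|[set x in Y | x i == a]| #|proj Y i| #|Y| m 2 c0 k0 km.
apply => //; last exact: k_le_D.
have DV : (#|proj Y i| <= 2 * #|V|)%N.
  by move: cV D1; case: (q i \in proj Y i) => /=; lia.
apply: leq_trans (leq_mul (leqnn _) DV) _.
by rewrite mulnCA leq_mul2l hg orbT.
Qed.

End Comb.

Local Open Scope ring_scope.

Lemma card_compl (A : finType) (S : {set A}) (P : pred A) :
  (#|[set t in S | P t]| + #|[set t in S | ~~ P t]| = #|S|)%N.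
Proof.
rewrite !card_sumT -big_split -sum1_card; apply: eq_bigr => t _; by case: (P t).
Qed.

Lemma mL_eq (R : realType) (m c : nat) : (0 < c)%N ->
  m%:R * m%:R `^ (1 - c%:R^-1) = m%:R `^ (2 - c%:R^-1) :> R.
Proof.
move=> c0.
have p1 : c%:R^-1 <= 1 :> R by rewrite invf_le1 ?ltr0n // ler1n.
have p0 : 0 < 2 - c%:R^-1 :> R by lra.
rewrite -(mulr_powRB1 (ler0n _ m) p0).
by congr (_ * _ `^ _); ring.
Qed.

Lemma PP_prob (R : realType) c s r (X : {set key c s}) (y : bits r) (S : {set table c s r}) :
  (0 < #|S|)%N ->
  #|[set t in S | y \in himg t X]|%:R / #|S|%:R = 1 - PP y S R X.
Proof.
move=> S0.
have := card_compl S (fun t => y \in himg t X).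
move/(congr1 (fun n => n%:R : R)); rewrite natrD => h.
have N0 : #|S|%:R != 0 :> R by rewrite pnatr_eq0 -lt0n.
rewrite /PP -h; field; by rewrite h.
Qed.

Lemma abs_flip (R : realType) (a b : R) : `|(1 - a) - (1 - b)| = `|a - b|.
Proof. have -> : 1 - a - (1 - b) = -(a - b) by ring. by rewrite normrN. Qed.

Lemma card_as_sum (A : finType) (P : pred A) : #|[set t | P t]| = (\sum_t (P t : nat))%N.
Proof. by rewrite -sum1_card big_mkcond; apply: eq_bigr => t _; rewrite inE; case: (P t). Qed.

Unset Implicit Arguments.

Theorem theorem1 (R : realType) (c s r m : nat) (X : {set key c s}) :
  (0 < c)%N -> (0 < s)%N -> #|X| = m ->
  let n : R := (2 ^ r)%:R in
  let p0 : R := 1 - (1 - n^-1) ^+ m in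
  let B : R := (m%:R : R) `^ (2 - c%:R^-1) in
  (forall y : bits r,
      `| prob R (fun t : table c s r => y \in himg t X) - p0 | <= B / n ^+ 2)
  /\ `| expect R (fun t : table c s r => #|himg t X|) - n * p0 | <= B / n
  /\ (forall q : key c s, q \notin X ->
        forall (f : bits r -> bits r) (z : bits r),
        `| cprob R (fun t : table c s r => f z \in himg t X) (fun t : table c s r => tab_hash t q == z) - p0 |
          <= 2 * B / n ^+ 2).
Proof.
move=> c0 s0 Xm n p0 B.
have n0 : 0 < n by rewrite /n ltr0n expn_gt0.
have Tpos : (0 < #|[set: table c s r]|)%N.
  by apply/card_gt0P; exists [ffun _ => [ffun _ => bzero r]]; rewrite finset.in_setT.
have closT : forall j b (t : table c s r) v, (fun _ _ => true) j b -> t \in [set: table c s r] ->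
    upd t j b v \in [set: table c s r] by move=> *; rewrite finset.in_setT.
have part1 y : `|prob R (fun t : table c s r => y \in himg t X) - p0| <= B / n ^+ 2.
  have := main_ind y Tpos closT (@pair1 c s X) (@grp1 c s R X m c0 Xm).
  have -> : prob R (fun t : table c s r => y \in himg t X) = 1 - PP y [set: table c s r] R X.
    by rewrite -PP_prob // /prob; congr (_%:R / _); apply: eq_card => t; rewrite !inE.
  by rewrite Xm /p0 /B -(mL_eq R m c0) abs_flip.
split => //; split.
  have e : \sum_(t : table c s r) (#|himg t X|)%:R = \sum_(y : bits r) (#|[set t : table c s r | y \in himg t X]|)%:R :> R.
    rewrite -!natr_sum; congr _%:R.
    transitivity (\sum_(t : table c s r) \sum_(y : bits r) ((y \in himg t X) : nat))%N.
      apply: eq_bigr => t _; rewrite -sum1_card big_mkcond; apply: eq_bigr => y _.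
      by case: (y \in himg t X).
    rewrite exchange_big; apply: eq_bigr => y _; by rewrite card_as_sum.
  have e2 : n * p0 = \sum_(y : bits r) p0 by rewrite sumr_const card_bits -mulr_natl.
  rewrite /expect e mulr_suml e2 -sumrB.
  apply: le_trans (ler_norm_sum _ _ _) _.
  apply: le_trans (ler_sum _ (fun y _ => part1 y)) _.
  rewrite sumr_const card_bits -mulr_natl -/n; apply: eqle; field; by rewrite gt_eqF.
move=> q qX f z.
set y := f z.
set S := [set t : table c s r | tab_hash t q == z].
have Spos : (0 < #|S|)%N.
  pose zt : table c s r := [ffun _ => [ffun _ => bzero r]].
  pose i0 : 'I_c := Ordinal c0.
  apply/card_gt0P; exists (upd zt i0 (q i0) z); rewrite inE hash_upd_in //.
  have -> : tab_hash zt q = bzero r by rewrite /tab_hash big1 // => k _; rewrite !ffunE.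
  by rewrite !ffunE bxor0r bxor0r.
have closS : forall j b (t : table c s r) v, (fun j b => b != q j) j b -> t \in S -> upd t j b v \in S.
  move=> j b t v /= Fb; rewrite !inE => /eqP <-; rewrite hash_upd_out // eq_sym //.
have := main_ind y Spos closS (@pair3 c s q X) (@grp3 c s R X m q c0 Xm qX).
have -> : cprob R (fun t : table c s r => y \in himg t X) (fun t : table c s r => tab_hash t q == z)
    = 1 - PP y S R X.
  by rewrite -PP_prob // /cprob; congr (_%:R / _%:R); apply: eq_card => t; rewrite !inE // andbC.
rewrite Xm /p0 -/y mulrCA (mL_eq R m c0) abs_flip.
by [].

Qed.
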